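(* There is $n_0$ such that for all $n\ge n_0$ and all $d\le n/2$, every $n$-vertex $d$-regular graph $F$ is guest-good with some value $t\ge0.01n\sqrt{d}$.
   Context: For a vertex $u$ and set $S$, $N_S(u)$ is the set of neighbors of $u$ in $S$ and $d_S(u)=|N_S(u)|$. An $n$-vertex graph $F$ is guest-good with value $t$ if there is a partition $V(F)=U\cup V$ with $|U|=\lfloor n/2\rfloor$, distinct vertices $u_1,u_1',\dots,u_m,u_m'\in U$ with $m\le0.05n$, and integers $d_1,\dots,d_m\ge1$, such that $t=\sum_{i=1}^m\sqrt{d_i}$ and for every $i\in[m]$: (1) $|N_V(u_i)\setminus N_V(u_i')|\ge0.01d_i$; (2) $|N_V(u_i)\setminus N_V(u_i')|\le\frac23|V|$ and $|N_V(u_i')\setminus N_V(u_i)|\le\frac23|V|$; (3) $U$ is an independent set in $F$, or $|d_V(u_i)-d_V(u_i')|\le20\sqrt{d_i}$. *)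

(* Defs.v *)
From mathcomp Require Import all_boot all_order all_algebra.
From mathcomp Require Import reals.
Set Implicit Arguments. Unset Strict Implicit. Unset Printing Implicit Defensive.
Import Order.TTheory GRing.Theory Num.Theory.
Local Open Scope ring_scope.

Definition simple_graph (n : nat) (e : rel 'I_n) : Prop :=
  symmetric e /\ irreflexive e.

Definition nbhd (n : nat) (e : rel 'I_n) (S : {set 'I_n}) (u : 'I_n) : {set 'I_n} :=
  [set w in S | e u w].

Definition regular (n : nat) (e : rel 'I_n) (d : nat) : Prop :=
  forall v : 'I_n, #|[set w | e v w]| = d.

Definition independent (n : nat) (e : rel 'I_n) (U : {set 'I_n}) : Prop :=
  forall x y, x \in U -> y \in U -> ~~ e x y.

Definition guest_good (R : realType) (n : nat) (e : rel 'I_n) (t : R) : Prop :=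
  exists U : {set 'I_n},
    #|U| = n./2 /\
    let V := ~: U in
    exists (m : nat) (u u' : 'I_m -> 'I_n) (dd : 'I_m -> nat),
      injective u /\ injective u' /\ (forall i j, u i != u' j) /\
      (forall i, u i \in U /\ u' i \in U) /\
      (m%:R <= n%:R / 20%:R :> R) /\
      (forall i, (1 <= dd i)%N) /\
      t = \sum_(i < m) Num.sqrt ((dd i)%:R : R) /\
      (forall i : 'I_m,
            [/\ (dd i)%:R / 100%:R <= (#|nbhd e V (u i) :\: nbhd e V (u' i)|)%:R :> R,
                (#|nbhd e V (u i) :\: nbhd e V (u' i)|)%:R <= 2%:R / 3%:R * (#|V|)%:R :> R,
                (#|nbhd e V (u' i) :\: nbhd e V (u i)|)%:R <= 2%:R / 3%:R * (#|V|)%:R :> R &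
                independent e U \/
                `|(#|nbhd e V (u i)|)%:R - (#|nbhd e V (u' i)|)%:R| <= 20%:R * Num.sqrt ((dd i)%:R) :> R]).

(* Main.v *)
Require Import Defs.
From mathcomp Require Import all_boot all_order all_algebra.
From mathcomp Require Import reals.
From mathcomp Require Import ring lra zify.
Set Implicit Arguments. Unset Strict Implicit. Unset Printing Implicit Defensive.

(* reals as abstract R : realType.  Proof via a second-moment
   (Chebyshev) counting argument over all balanced bipartitions. *)
Module LH.
Import Order.TTheory GRing.Theory Num.Theory.

Lemma cnt_sup (T : finType) (A S : {set T}) k :
  S \subset A -> (#|S| <= k)%N ->
  #|[set V : {set T} | (V \subset A) && (#|V| == k) && (S \subset V)]| = 'C(#|A| - #|S|, k - #|S|).
Proof.
move=> SA Sk.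
have cAS : #|A :\: S| = (#|A| - #|S|)%N by rewrite cardsD (setIidPr SA).
rewrite -cAS -cards_draws.
have -> : [set V : {set T} | (V \subset A) && (#|V| == k) && (S \subset V)] =
   [set W :|: S | W in [set W : {set T} | W \subset A :\: S & #|W| == (k - #|S|)%N]].
  apply/setP => V; rewrite inE; apply/idP/imsetP.
  - case/andP => /andP [VA /eqP Vk] SV.
    exists (V :\: S); last by rewrite -{1}(setID V S) (setIidPr SV) setUC.
    rewrite inE setSD //= cardsD (setIidPr SV) Vk //.
  - case=> W; rewrite inE => /andP [WAS /eqP Wk] ->.
    have dWS : W :&: S = set0.
      apply/setP=> z; rewrite !inE; apply/negbTE; apply/negP => /andP [zW zS].
      by have := subsetP WAS z zW; rewrite inE zS.
    rewrite cardsU dWS cards0 subn0 Wk subnK // subsetUr andbT.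
    rewrite eqxx andbT subUset SA andbT.
    by apply: subset_trans WAS (subsetDl _ _).
apply: card_in_imset => W1 W2; rewrite !inE => /andP [h1 _] /andP [h2 _] E.
have d1 : W1 :&: S = set0.
  apply/setP=> z; rewrite !inE; apply/negbTE; apply/negP => /andP [zW zS].
  by have := subsetP h1 z zW; rewrite inE zS.
have d2 : W2 :&: S = set0.
  apply/setP=> z; rewrite !inE; apply/negbTE; apply/negP => /andP [zW zS].
  by have := subsetP h2 z zW; rewrite inE zS.
apply/setP => z; move/setP: E => /(_ z); rewrite !inE.
move/setP: d1 => /(_ z); move/setP: d2 => /(_ z); rewrite !inE.
by case: (z \in S); case: (z \in W1); case: (z \in W2); rewrite ?andbF ?andbT.
Qed.

End LH.

Module LG.

Section Graph.
Variables (n : nat) (e : rel 'I_n) (d : nat).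
Hypotheses (esym : symmetric e) (eirr : irreflexive e) (ereg : forall v : 'I_n, #|[set w | e v w]| = d).

Definition Nb x := [set w | e x w].
Definition Dset x w := (Nb x :\: Nb w) :\ w.

Lemma cardNb x : #|Nb x| = d. Proof. exact: ereg. Qed.

Lemma card_diff x w : #|Nb x :\: Nb w| = (d - #|Nb x :&: Nb w|)%N.
Proof. by rewrite cardsD cardNb. Qed.

Lemma card_Dset_sym x w : #|Dset x w| = #|Dset w x|.
Proof.
have h1 := cardsD1 w (Nb x :\: Nb w).
have h2 := cardsD1 x (Nb w :\: Nb x).
have e1 : (w \in Nb x :\: Nb w) = (x \in Nb w :\: Nb x).
  by rewrite !inE !eirr esym.
have e2 : #|Nb x :\: Nb w| = #|Nb w :\: Nb x| by rewrite !card_diff setIC.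
rewrite /Dset; move: h1 h2; rewrite e1 e2; lia.
Qed.

Lemma Dset_bound x w : (d <= #|Dset x w| + #|Nb x :&: Nb w| + e x w)%N.
Proof.
have h1 := cardsD1 w (Nb x :\: Nb w).
have h3 : (#|Nb x :&: Nb w| <= d)%N by rewrite -(cardNb x) subset_leq_card // subsetIl.
have h4 : (w \in Nb x :\: Nb w) <= e x w by rewrite !inE !eirr; case: (e x w).
move: h1; rewrite card_diff /Dset; lia.
Qed.

Lemma card_I_sum (A B : {set 'I_n}) : #|A :&: B| = (\sum_(z in A) (z \in B))%N.
Proof.
rewrite -sum1_card big_mkcond [RHS]big_mkcond /=; apply: eq_bigr => z _.
by rewrite inE; case: (z \in A); case: (z \in B).
Qed.

Lemma sum_codeg x : (\sum_w #|Nb x :&: Nb w| = d * d)%N.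
Proof.
under eq_bigr => w _ do rewrite card_I_sum.
rewrite exchange_big /=.
transitivity (\sum_(z in Nb x) d)%N; last by rewrite sum_nat_const cardNb.
apply: eq_bigr => z _; rewrite -(cardNb z) -sum1_card [RHS]big_mkcond /=.
by apply: eq_bigr => w _; rewrite !inE esym; case: (e z w).
Qed.

Lemma sum_adj x : (\sum_w (e x w : nat) = d)%N.
Proof.
by rewrite -(cardNb x) -sum1_card [RHS]big_mkcond /=; apply: eq_bigr => w _; rewrite inE; case: (e x w).
Qed.

Lemma bad_count x : (0 < d)%N -> (9 * #|[set w | (10 * #|Dset x w| < d)%N]| <= 10 * (d + 1))%N.
Proof.
move=> d0.
set B := [set w | _].
have h : (d * (9 * #|B|) <= d * (10 * (d + 1)))%N.
  have -> : (d * (9 * #|B|) = \sum_(w in B) 9 * d)%N by rewrite sum_nat_const; lia.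
  apply: (@leq_trans (\sum_(w in B) 10 * (#|Nb x :&: Nb w| + e x w))%N).
    apply: leq_sum => w; rewrite inE => hw; have := Dset_bound x w; lia.
  apply: (@leq_trans (\sum_w 10 * (#|Nb x :&: Nb w| + e x w))%N).
    rewrite [X in (_ <= X)%N](bigID (fun w => w \in B)) /=; apply: leq_addr.
  rewrite -big_distrr /= big_split /= sum_codeg sum_adj; lia.
by rewrite leq_pmul2l in h.
Qed.


Lemma greedy j : (0 < d)%N -> (18 * j + 10 * (d + 1) < 9 * n)%N ->
  exists s : seq ('I_n * 'I_n),
    [/\ size s = j, uniq (map fst s ++ map snd s) &
        all (fun q => (d <= 10 * #|Dset q.1 q.2|)%N) s].
Proof.
move=> d0; elim: j => [|j IH] hj; first by exists [::].
have [s [ss us als]] := IH ltac:(lia).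
set L := map fst s ++ map snd s.
set Us := [set z in L].
have cUs : (#|Us| <= 2 * j)%N.
  rewrite /Us cardsE; apply: (leq_trans (card_size L)); rewrite /L size_cat !size_map ss; lia.
have [x xU] : exists x, x \in ~: Us.
  by apply/card_gt0P; have := cardsC Us; rewrite card_ord; lia.
set G := [set w | (w \in ~: Us) && (d <= 10 * #|Dset x w|)%N].
set Bd := [set w | (10 * #|Dset x w| < d)%N].
have hB := bad_count x d0; rewrite -/Bd in hB.
have hsub : ~: Us \subset G :|: Bd.
  apply/subsetP => z zU; rewrite !inE; move: zU; rewrite !inE => -> /=.
  by case: leqP.
have hG : (0 < #|G|)%N.
  have h1 := subset_leq_card hsub.
  have h2 := (leq_card_setU G Bd).1.
  have h3 : #|~: Us| = (n - #|Us|)%N by have := cardsC Us; rewrite card_ord; lia.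
  lia.
have [w wG] : exists w, w \in G by apply/card_gt0P.
move: wG; rewrite inE => /andP [wU dw].
have xw : x != w.
  apply/eqP => exw; move: dw; rewrite -exw.
  have -> : Dset x x = set0.
    by apply/setP => z; rewrite !inE; case: (e x z); rewrite ?andbF ?andbT.
  by rewrite cards0; lia.
exists ((x, w) :: s); split => //=; first by rewrite ss.
- move: xU wU; rewrite !inE -/L => xU wU.
  rewrite mem_cat negb_or inE negb_or xw /=.
  move: xU; rewrite mem_cat negb_or => /andP [-> ->] /=.
  rewrite cat_uniq /= -/L.
  move: us; rewrite cat_uniq => /and3P [u1 u2 u3]; rewrite u1 u3 /=.
  move: wU; rewrite mem_cat negb_or => /andP [w1 w2].
  by rewrite negb_or w1 w2 u2.
- by rewrite dw als.
Qed.

End Graph.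

End LG.

Module LM.
Import Order.TTheory GRing.Theory Num.Theory.
Import LH.
Local Open Scope ring_scope.

Section Mom.
Variables (R : realType) (T : finType) (A : {set T}) (k : nat).
Let F := [set V : {set T} | (V \subset A) && (#|V| == k)].

Lemma sum_in_V (V : {set T}) (g : T -> R) : V \subset A ->
  \sum_(z in V) g z = \sum_(z in A) (z \in V)%:R * g z.
Proof.
move=> VA; rewrite [RHS]big_mkcond [LHS]big_mkcond /=; apply: eq_bigr => z _.
case zV: (z \in V); last by rewrite mul0r; case: (z \in A).
by rewrite (subsetP VA) // mul1r.
Qed.

Lemma mom1_gen (g : T -> R) :
  \sum_(V in F) \sum_(z in V) g z =
  \sum_(z in A) g z * (#|[set V in F | z \in V]|)%:R.
Proof.
transitivity (\sum_(V in F) \sum_(z in A) (z \in V)%:R * g z).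
  by apply: eq_bigr => V; rewrite inE => /andP [VA _]; apply: sum_in_V.
rewrite exchange_big /=; apply: eq_bigr => z _.
rewrite -big_distrl /= mulrC; congr (_ * _).
rewrite -sum1_card natr_sum [RHS]big_mkcond [LHS]big_mkcond /=; apply: eq_bigr => V _.
by rewrite !inE; case: (_ && _); case: (z \in V).
Qed.

Lemma mom2_gen (g : T -> T -> R) :
  \sum_(V in F) \sum_(z in V) \sum_(z' in V) g z z' =
  \sum_(z in A) \sum_(z' in A) g z z' * (#|[set V in F | (z \in V) && (z' \in V)]|)%:R.
Proof.
transitivity (\sum_(V in F) \sum_(z in A) \sum_(z' in A) ((z \in V) && (z' \in V))%:R * g z z').
  apply: eq_bigr => V; rewrite inE => /andP [VA _]; rewrite sum_in_V //; apply: eq_bigr => z _.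
  rewrite sum_in_V // big_distrr /=; apply: eq_bigr => z' _.
  by case: (z \in V); case: (z' \in V); rewrite /= ?mul0r ?mul1r.
rewrite exchange_big /=; apply: eq_bigr => z _.
rewrite exchange_big /=; apply: eq_bigr => z' _.
rewrite -big_distrl /= mulrC; congr (_ * _).
rewrite -sum1_card natr_sum [RHS]big_mkcond [LHS]big_mkcond /=; apply: eq_bigr => V _.
by rewrite !inE; case: (_ && _); case: (z \in V); case: (z' \in V).
Qed.


Lemma cnt1 z : z \in A -> (0 < k)%N ->
  #|[set V in F | z \in V]| = 'C(#|A|.-1, k.-1).
Proof.
move=> zA k0.
have -> : [set V in F | z \in V] = [set V : {set T} | (V \subset A) && (#|V| == k) && ([set z] \subset V)].
  by apply/setP => V; rewrite !inE sub1set.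
by rewrite cnt_sup ?cards1 ?subn1 // sub1set.
Qed.

Lemma cnt2 z z' : z \in A -> z' \in A -> z != z' -> (1 < k)%N ->
  #|[set V in F | (z \in V) && (z' \in V)]| = 'C(#|A|.-2, k.-2).
Proof.
move=> zA zA' nz k0.
have -> : [set V in F | (z \in V) && (z' \in V)] = [set V : {set T} | (V \subset A) && (#|V| == k) && ([set z; z'] \subset V)].
  by apply/setP => V; rewrite !inE subUset !sub1set.
rewrite cnt_sup ?cards2 ?nz ?subUset ?sub1set ?zA ?zA' //.
by rewrite -!subn1 -!subnDA.
Qed.

Lemma mom1 (c : T -> R) : (0 < k)%N ->
  \sum_(V in F) \sum_(z in V) c z = 'C(#|A|.-1, k.-1)%:R * \sum_(z in A) c z.
Proof.
move=> k0; rewrite mom1_gen big_distrr /=; apply: eq_bigr => z zA.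
by rewrite cnt1 // mulrC.
Qed.

Lemma mom2 (c : T -> R) : (1 < k)%N ->
  \sum_(V in F) (\sum_(z in V) c z) ^+ 2 =
  ('C(#|A|.-1, k.-1)%:R - 'C(#|A|.-2, k.-2)%:R) * \sum_(z in A) c z ^+ 2
  + 'C(#|A|.-2, k.-2)%:R * (\sum_(z in A) c z) ^+ 2.
Proof.
move=> k1.
set C1 := 'C(#|A|.-1, k.-1)%:R; set C2 := 'C(#|A|.-2, k.-2)%:R.
transitivity (\sum_(V in F) \sum_(z in V) \sum_(z' in V) c z * c z').
  apply: eq_bigr => V _; rewrite expr2 big_distrl /=; apply: eq_bigr => z _.
  by rewrite big_distrr.
rewrite mom2_gen.
transitivity (\sum_(z in A) ((C1 - C2) * c z ^+ 2 + C2 * (c z * \sum_(z' in A) c z'))).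
  apply: eq_bigr => z zA.
  rewrite big_distrr /= (bigD1 z zA) /= [in RHS](bigD1 z zA) /=.
  have -> : [set V in F | (z \in V) && (z \in V)] = [set V in F | z \in V].
    by apply/setP=> V; rewrite !inE andbb.
  rewrite cnt1 //; last by apply: ltnW.
  rewrite mulrDr addrA; congr (_ + _); first by rewrite /C1 /C2; ring.
  rewrite big_distrr /=; apply: eq_bigr => z' /andP [zA' nz].
  by rewrite cnt2 // 1?eq_sym // mulrC.
rewrite big_split /= -!big_distrr /= -big_distrl /= expr2; ring.
Qed.

End Mom.

End LM.

Module LP.
Import Order.TTheory GRing.Theory Num.Theory.
Import LH LM.
Local Open Scope ring_scope.

Lemma sum_ind (R : realType) (T : finType) (V D : {set T}) :
  \sum_(z in V) ((z \in D)%:R : R) = (#|D :&: V|)%:R.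
Proof.
rewrite -sum1_card natr_sum [RHS]big_mkcond [LHS]big_mkcond /=; apply: eq_bigr => z _.
by rewrite inE; case: (z \in V); case: (z \in D).
Qed.

Lemma sum_indA (R : realType) (T : finType) (A D : {set T}) :
  D \subset A -> \sum_(z in A) ((z \in D)%:R : R) = (#|D|)%:R.
Proof. by move=> DA; rewrite sum_ind (setIidPl DA). Qed.

Lemma card_F (T : finType) (A : {set T}) k :
  #|[set V : {set T} | (V \subset A) && (#|V| == k)]| = 'C(#|A|, k).
Proof. by rewrite -cards_draws. Qed.

Section Pair.
Variables (R : realType) (T : finType) (A D E : {set T}) (k p d : nat).
Let F := [set V : {set T} | (V \subset A) && (#|V| == k)].
Hypotheses (DA : D \subset A) (EA : E \subset A) (DE : D :&: E = set0)
  (Dp : #|D| = p) (Ep : #|E| = p) (k1 : (1 < k)%N) (kN : (k < #|A|)%N) (kN2 : (#|A| <= 2 * k)%N)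
  (p0 : (0 < p)%N) (pd : (p <= d)%N) (dp : (d <= 10 * p)%N).
Hypothesis (hs : 100 * p%:R <= (2 * k%:R / 3 - p%:R * k%:R / #|A|%:R) ^+ 2 :> R)
  (hs0 : 0 <= (2 * k%:R / 3 - p%:R * k%:R / #|A|%:R) :> R).

Definition goodP (V : {set T}) : bool :=
  [&& (d%:R <= 100 * (#|D :&: V|)%:R :> R),
      (3 * (#|D :&: V|)%:R <= 2 * k%:R :> R),
      (3 * (#|E :&: V|)%:R <= 2 * k%:R :> R) &
      (((#|D :&: V|)%:R - (#|E :&: V|)%:R) ^+ 2 <= 400 * d%:R :> R)].

Lemma pair_bound : 3 / 8 * (#|F|)%:R <= \sum_(V in F) ((goodP V)%:R : R).
Proof.
set N := #|A|.
have k0 : (0 < k)%N by apply: ltnW.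
have N0 : (0 < N)%N by apply: leq_ltn_trans kN.
have r1 : (N * 'C(N.-1, k.-1) = k * #|F|)%N.
  by rewrite card_F mul_bin_diag prednK.
have r2 : (N.-1 * 'C(N.-2, k.-2) = k.-1 * 'C(N.-1, k.-1))%N.
  rewrite mul_bin_diag; congr (_ * 'C(_, _))%N; rewrite -subn2 -subn1; lia.
set Fc : R := (#|F|)%:R.
set c1 : R := ('C(N.-1, k.-1))%:R.
set c2 : R := ('C(N.-2, k.-2))%:R.
set NN : R := N%:R. set kk : R := k%:R. set pp : R := p%:R. set dd : R := d%:R.
have R1 : NN * c1 = kk * Fc by rewrite /NN /c1 /kk /Fc -!natrM r1.
have R2 : (NN - 1) * c2 = (kk - 1) * c1.
  have -> : NN - 1 = (N.-1)%:R by rewrite /NN -subn1 natrB.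
  have -> : kk - 1 = (k.-1)%:R by rewrite /kk -subn1 natrB.
  by rewrite /c1 /c2 -!natrM r2.
have NNp : 0 < NN by rewrite /NN ltr0n.
have kkN : kk + 1 <= NN by rewrite /kk /NN natr1 ler_nat.
have kk2 : 2 <= kk by rewrite /kk ler_nat.
have kN2' : NN <= 2 * kk by rewrite /kk /NN -natrM ler_nat.
have Fc0 : 0 <= Fc by apply: ler0n.
have c10 : 0 <= c1 by apply: ler0n.
have c20 : 0 <= c2 by apply: ler0n.
have pp0 : 0 < pp by rewrite /pp ltr0n.
have ppd : pp <= dd by rewrite /pp /dd ler_nat.
have dpp : dd <= 10 * pp by rewrite /pp /dd -natrM ler_nat.
have pN : pp <= NN by rewrite /pp /NN ler_nat -Dp subset_leq_card.
have c1F : c1 <= Fc.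
  rewrite -(ler_pM2l NNp) R1; apply: ler_wpM2r => //; lra.
have c1F2 : Fc <= 2 * c1.
  rewrite -(ler_pM2l NNp) mulrCA R1; nra.
have c21 : c2 <= c1.
  have h : 0 < NN - 1 by lra.
  rewrite -(ler_pM2l h) R2; nra.
have aV (V : {set T}) : \sum_(z in V) ((z \in D)%:R : R) = (#|D :&: V|)%:R by apply: sum_ind.
have bV (V : {set T}) : \sum_(z in V) ((z \in E)%:R : R) = (#|E :&: V|)%:R by apply: sum_ind.
have M1 : \sum_(V in F) ((#|D :&: V|)%:R : R) = c1 * pp.
  have := @mom1 R T A k (fun z => (z \in D)%:R) k0.
  rewrite sum_indA // Dp => h.
  transitivity (\sum_(V in F) \sum_(z in V) ((z \in D)%:R : R)); first by apply: eq_bigr => V _; rewrite aV.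
  exact: h.
have M3 : \sum_(V in F) ((#|D :&: V|)%:R - (#|E :&: V|)%:R) ^+ 2 = (c1 - c2) * (2 * pp).
  have := @mom2 R T A k (fun z => ((z \in D)%:R - (z \in E)%:R)) k1.
  rewrite sumrB !sum_indA // Dp Ep subrr expr0n /= mulr0 addr0.
  have -> : \sum_(z in A) ((z \in D)%:R - (z \in E)%:R) ^+ 2 = \sum_(z in A) ((z \in D)%:R + (z \in E)%:R : R).
    apply: eq_bigr => z _; move/setP: DE => /(_ z); rewrite !inE.
    by case: (z \in D); case: (z \in E) => //= _; rewrite ?subr0 ?sub0r ?expr1n ?sqrrN ?expr1n ?addr0 ?add0r ?expr0n.
  rewrite big_split /= !sum_indA // Dp Ep => h.
  transitivity (\sum_(V in F) (\sum_(z in V) ((z \in D)%:R - (z \in E)%:R : R)) ^+ 2).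
    by apply: eq_bigr => V _; rewrite sumrB aV bV.
  rewrite h /c1 /c2 /pp; congr (_ * _); ring.
have M2 (X : {set T}) : X \subset A -> #|X| = p ->
   \sum_(V in F) ((#|X :&: V|)%:R - pp / NN * kk) ^+ 2 <= Fc * pp.
  move=> XA Xp.
  have h := @mom2 R T A k (fun z => ((z \in X)%:R - pp / NN)) k1.
  have NN0 : NN != 0 by rewrite gt_eqF.
  have e1 : \sum_(z in A) ((z \in X)%:R - pp / NN) = 0.
    rewrite sumrB sum_indA // sumr_const Xp -[_ / NN *+ _]mulr_natr -/N -/NN -/pp.
    by rewrite mulfVK // subrr.
  have e2 : \sum_(z in A) ((z \in X)%:R - pp / NN) ^+ 2 = pp - pp * pp / NN.
    transitivity (\sum_(z in A) ((z \in X)%:R * (1 - 2 * (pp / NN)) + (pp / NN)^+2 : R)).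
      by apply: eq_bigr => z _; case: (z \in X); rewrite /= ?mul1r ?mul0r ?add0r ?sub0r ?sqrrN //; ring.
    rewrite big_split /= -big_distrl /= sum_indA // sumr_const Xp -[_ *+ #|A|]mulr_natr -/pp -/N -/NN.
    by field.
  rewrite e1 e2 expr0n /= mulr0 addr0 in h.
  have -> : \sum_(V in F) ((#|X :&: V|)%:R - pp / NN * kk) ^+ 2 = \sum_(V in F) (\sum_(z in V) ((z \in X)%:R - pp / NN)) ^+ 2.
    apply: eq_bigr => V; rewrite inE => /andP [_ /eqP Vk].
    by rewrite sumrB sum_ind sumr_const Vk -[_ *+ k]mulr_natr.
  rewrite h -/c1 -/c2.
  have h1 : 0 <= pp * pp / NN by apply: divr_ge0; nra.
  have h2 : pp * pp / NN <= pp.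
    by rewrite ler_pdivrMr // ler_pM2l.
  nra.
set s := 2 * kk / 3 - pp * kk / NN.
have ss : pp / NN * kk = pp * kk / NN by rewrite mulrAC.
pose a (V : {set T}) : R := (#|D :&: V|)%:R.
pose b (V : {set T}) : R := (#|E :&: V|)%:R.
pose g1 V := dd <= 100 * a V.
pose g2 V := 3 * a V <= 2 * kk.
pose g3 V := 3 * b V <= 2 * kk.
pose g4 V := (a V - b V) ^+ 2 <= 400 * dd.
have gP V : goodP V = [&& g1 V, g2 V, g3 V & g4 V] by [].
have P0 V : 1 <= (goodP V)%:R + (~~ g1 V)%:R + (~~ g2 V)%:R + (~~ g3 V)%:R + (~~ g4 V)%:R :> R.
  by rewrite gP; case: (g1 V); case: (g2 V); case: (g3 V); case: (g4 V); rewrite /= ?addr0 ?add0r ?lexx ?ler_addl ?ler0n // -!natrD ler1n.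
have P1 V : a V <= pp - (pp - dd / 100) * (~~ g1 V)%:R.
  have : a V <= pp by rewrite /a /pp ler_nat -Dp subset_leq_card // subsetIl.
  rewrite /g1; case h: (dd <= 100 * a V) => /= hp; first by rewrite mulr0 subr0.
  rewrite mulr1; have : 100 * a V < dd by rewrite ltNge h.
  lra.
have P4 V : (~~ g4 V)%:R * (400 * dd) <= (a V - b V) ^+ 2.
  rewrite /g4; case h: ((a V - b V) ^+ 2 <= 400 * dd) => /=; first by rewrite mul0r sqr_ge0.
  by rewrite mul1r; apply: ltW; rewrite ltNge h.
have P2 (X : {set T}) V : (~~ (3 * (#|X :&: V|)%:R <= 2 * kk))%:R * s ^+ 2 <= ((#|X :&: V|)%:R - pp / NN * kk) ^+ 2.
  case h: (3 * (#|X :&: V|)%:R <= 2 * kk) => /=; first by rewrite mul0r sqr_ge0.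
  have h' : 2 * kk < 3 * (#|X :&: V|)%:R by rewrite ltNge h.
  rewrite mul1r ss; have hs1 : 0 <= s by [].
  have hs2 : s < (#|X :&: V|)%:R - pp * kk / NN by rewrite /s; lra.
  nra.
have S0 : Fc <= \sum_(V in F) ((goodP V)%:R + (~~ g1 V)%:R + (~~ g2 V)%:R + (~~ g3 V)%:R + (~~ g4 V)%:R).
  have -> : Fc = \sum_(V in F) (1 : R) by rewrite sumr_const.
  by apply: ler_sum => V _; apply: P0.
rewrite !big_split /= in S0.
set G := \sum_(V in F) _ in S0 *.
set B1 := \sum_(V in F) ((~~ g1 V)%:R : R) in S0.
set B2 := \sum_(V in F) ((~~ g2 V)%:R : R) in S0.
set B3 := \sum_(V in F) ((~~ g3 V)%:R : R) in S0.
set B4 := \sum_(V in F) ((~~ g4 V)%:R : R) in S0.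
have B10 : 0 <= B1 by apply: sumr_ge0 => V _; apply: ler0n.
have B20 : 0 <= B2 by apply: sumr_ge0 => V _; apply: ler0n.
have B30 : 0 <= B3 by apply: sumr_ge0 => V _; apply: ler0n.
have B40 : 0 <= B4 by apply: sumr_ge0 => V _; apply: ler0n.
have S1 : c1 * pp <= pp * Fc - (pp - dd / 100) * B1.
  have h : \sum_(V in F) a V <= \sum_(V in F) (pp - (pp - dd / 100) * (~~ g1 V)%:R).
    by apply: ler_sum => V _; apply: P1.
  by rewrite sumrB sumr_const -mulr_sumr -[pp *+ _]mulr_natr M1 in h.
have S4 : B4 * (400 * dd) <= (c1 - c2) * (2 * pp).
  rewrite -M3 /B4 mulr_suml; apply: ler_sum => V _; apply: P4.
have S2 : B2 * s ^+ 2 <= Fc * pp.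
  apply: le_trans (M2 D DA Dp); rewrite /B2 mulr_suml; apply: ler_sum => V _; apply: P2.
have S3 : B3 * s ^+ 2 <= Fc * pp.
  apply: le_trans (M2 E EA Ep); rewrite /B3 mulr_suml; apply: ler_sum => V _; apply: P2.
have hs' : 100 * pp <= s ^+ 2 by [].
have T1 : B1 <= 5 / 9 * Fc.
  have : (9 / 10 * pp) * B1 <= pp * Fc / 2 by nra.
  move=> h; nra.
have T4 : B4 <= Fc / 200.
  have : B4 * (400 * dd) <= 2 * dd * Fc by nra.
  move=> h; have dd0 : 0 < dd by lra.
  nra.
have T2 : B2 <= Fc / 100.
  have : B2 * (100 * pp) <= Fc * pp by nra.
  move=> h; nra.
have T3 : B3 <= Fc / 100.
  have : B3 * (100 * pp) <= Fc * pp by nra.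
  move=> h; nra.
clearbody G B1 B2 B3 B4 Fc; lra.
Qed.
End Pair.

End LP.

Module LN.
Import Order.TTheory GRing.Theory Num.Theory.
Local Open Scope ring_scope.

Lemma num_hs (R : realType) (n k p : nat) : (20000 <= n)%N -> (n <= 2 * k)%N -> (k <= n)%N -> (2 * p <= n)%N ->
  100 * p%:R <= (2 * k%:R / 3 - p%:R * k%:R / (n - 2)%:R) ^+ 2 :> R /\
  0 <= 2 * k%:R / 3 - p%:R * k%:R / (n - 2)%:R :> R.
Proof.
move=> hn h1 h2 h3.
have en : (n - 2)%:R = n%:R - 2 :> R.
  rewrite natrB //.
  by apply: leq_trans hn.
rewrite en.
have hn' : 20000 <= n%:R :> R by rewrite (ler_nat R 20000).
have h1' : n%:R <= 2 * k%:R :> R by rewrite -natrM ler_nat.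
have h3' : 2 * p%:R <= n%:R :> R by rewrite -natrM ler_nat.
have p0 : 0 <= p%:R :> R by [].
have k0 : 0 <= k%:R :> R by [].
have N0 : 0 < n%:R - 2 :> R by lra.
have hq : p%:R * k%:R / (n%:R - 2) <= 17 / 30 * k%:R :> R.
  rewrite ler_pdivrMr //; nra.
have hs : k%:R / 10 <= 2 * k%:R / 3 - p%:R * k%:R / (n%:R - 2) :> R by lra.
split; last by lra.
have : (k%:R / 10) ^+ 2 <= (2 * k%:R / 3 - p%:R * k%:R / (n%:R - 2)) ^+ 2 :> R.
  by rewrite ler_sqr // ?nnegrE; lra.
have : 100 * p%:R <= (k%:R / 10) ^+ 2 :> R by nra.
lra.
Qed.

Lemma num_cnt (R : realType) n : (20000 <= n)%N ->
  (n %/ 100)%:R * (n%:R * (n%:R - 1)) < 3 / 8 * (n %/ 5)%:R * ((n./2)%:R * ((n./2)%:R - 1)) :> R.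
Proof.
move=> hn.
have hn2 : (2000 <= n)%N by apply: leq_trans hn.
have ha : 100 * (n %/ 100)%:R <= n%:R :> R.
  have : (100 * (n %/ 100) <= n)%N by lia.
  by rewrite -(ler_nat R) natrM.
have hb : n%:R <= 5 * (n %/ 5)%:R + 4 :> R.
  have : (n <= 5 * (n %/ 5) + 4)%N by lia.
  by rewrite -(ler_nat R) natrD natrM.
have hc : n%:R <= 2 * (n./2)%:R + 1 :> R.
  have : (n <= 2 * (n./2) + 1)%N by rewrite -divn2; lia.
  by rewrite -(ler_nat R) natrD natrM.
have hn' : 20000 <= n%:R :> R by rewrite (ler_nat R 20000).
set a := (n %/ 100)%:R in ha *; set b := (n %/ 5)%:R in hb *; set c := (n./2)%:R in hc *.
have a0 : 0 <= a by apply: ler0n.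
have e1 : a * (n%:R * (n%:R - 1)) <= n%:R * n%:R * (n%:R - 1) / 100.
  have : 0 <= n%:R * (n%:R - 1) :> R by nra.
  move=> h; nra.
have e2 : (n%:R - 1) * (n%:R - 3) / 4 <= c * (c - 1) by nra.
have e3 : (n%:R - 4) / 5 <= b by lra.
have e4 : 0 <= (n%:R - 1) * (n%:R - 3) / 4 :> R by nra.
have e5 : (n%:R - 4) / 5 * ((n%:R - 1) * (n%:R - 3) / 4) <= b * (c * (c - 1)).
  by apply: ler_pM => //; lra.
have e6 : n%:R * n%:R * (n%:R - 1) / 100 < 3 / 8 * ((n%:R - 4) / 5 * ((n%:R - 1) * (n%:R - 3) / 4)) :> R.
  have : 0 < n%:R - 1 :> R by lra.
  move=> h; have : n%:R * n%:R / 100 < 3 / 8 * ((n%:R - 4) / 5 * ((n%:R - 3) / 4)) :> R by nra.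
  move=> h2; nra.
nra.
Qed.

End LN.

Import Order.TTheory GRing.Theory Num.Theory.
Import LH LG LM LP LN.
Local Open Scope ring_scope.

Lemma nbhd_diff n (e : rel 'I_n) (V : {set 'I_n}) x w :
  V \subset ~: [set x; w] -> nbhd e V x :\: nbhd e V w = Dset e x w :&: V.
Proof.
move=> VA; apply/setP => z; rewrite !inE.
case zV: (z \in V) => /=; last by rewrite !andbF.
have zw : z != w.
  apply/eqP => zw; move: (subsetP VA z zV); rewrite zw !inE eqxx orbT //.
by rewrite zw andbT.
Qed.

Lemma sel_props (T : eqType) (x0 : T) (sel : seq (T * T)) M :
  size sel = M -> uniq (map fst sel ++ map snd sel) ->
  [/\ injective (fun i : 'I_M => (nth (x0, x0) sel i).1),
      injective (fun i : 'I_M => (nth (x0, x0) sel i).2) &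
      forall i j : 'I_M, (nth (x0, x0) sel i).1 != (nth (x0, x0) sel j).2].
Proof.
move=> sz us; set L := map fst sel ++ map snd sel.
have sL : size L = (M + M)%N by rewrite size_cat !size_map sz.
have e1 (i : 'I_M) : (nth (x0, x0) sel i).1 = nth x0 L i.
  by rewrite nth_cat size_map sz ltn_ord (nth_map (x0, x0)) // sz.
have e2 (i : 'I_M) : (nth (x0, x0) sel i).2 = nth x0 L (M + i).
  by rewrite nth_cat size_map sz ltnNge leq_addr /= addKn (nth_map (x0, x0)) // sz.
have lt1 (i : 'I_M) : (i < size L)%N by rewrite sL; apply: leq_trans (ltn_ord i) (leq_addr _ _).
have lt2 (i : 'I_M) : (M + i < size L)%N by rewrite sL ltn_add2l.
split.
- move=> i j /eqP; rewrite !e1 nth_uniq // => /eqP h; exact: val_inj.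
- move=> i j /eqP; rewrite !e2 nth_uniq // eqn_add2l => /eqP h; exact: val_inj.
- move=> i j; rewrite e1 e2 nth_uniq //; apply/eqP => h.
  by have := ltn_ord i; rewrite h; lia.
Qed.

Unset Implicit Arguments.

Theorem lemma2p14 (R : realType) :
  exists n0 : nat, forall (n d : nat) (e : rel 'I_n),
    (n0 <= n)%N -> (d <= n./2)%N ->
    simple_graph e -> regular e d ->
    exists t : R, n%:R * Num.sqrt (d%:R : R) / 100%:R <= t /\ guest_good e t.
Proof.
exists 20000%N => n d e hn hd [esym eirr] ereg.
have hn2 : (2000 <= n)%N by apply: leq_trans hn.
have n0 : (0 < n)%N by lia.
pose x0 : 'I_n := Ordinal n0.
pose k := (n - n./2)%N.
have hd' : (d <= n %/ 2)%N by rewrite divn2.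
have hk : (k = n - n %/ 2)%N by rewrite /k divn2.
pose VV := [set V : {set 'I_n} | #|V| == k].
have cardU (V0 : {set 'I_n}) : V0 \in VV -> #|~: V0| = n./2.
  rewrite inE => /eqP h; have := cardsC V0; rewrite card_ord h -divn2 hk; lia.
case: (posnP d) => [d0 | dpos].
  have [V0 V0in] : exists V0, V0 \in VV.
    apply/card_gt0P; rewrite /VV card_draws card_ord bin_gt0 hk; lia.
  exists 0; split; first by rewrite d0 sqrtr0 mulr0 mul0r.
  exists (~: V0); split; first exact: cardU.
  cbv zeta.
  exists 0%N, (fun _ => x0), (fun _ => x0), (fun _ => 1%N).
  split; first by case.
  split; first by case.
  split; first by case.
  split; first by case.
  split; first by apply: divr_ge0.
  split; first by [].
  split; first by rewrite big_ord0.
  by case.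
pose m0 := (n %/ 5)%N.
have [s [ss us als]] := greedy esym eirr ereg (j := m0) dpos ltac:(rewrite /m0; lia).
pose A (q : 'I_n * 'I_n) := ~: [set q.1; q.2].
pose gV (q : 'I_n * 'I_n) (V : {set 'I_n}) := [&& V \subset A q, #|V| == k & goodP R (Dset e q.1 q.2) (Dset e q.2 q.1) k d V].
pose C2 := 'C(n - 2, k).
have pairq q : q \in s -> 3 / 8 * C2%:R <= \sum_(V in VV) ((gV q V)%:R : R).
  move=> qs.
  have xw : q.1 != q.2.
    apply/eqP => h; move: us; rewrite cat_uniq => /and3P [_ /hasPn hh _].
    have : q.2 \in map snd s by apply: map_f.
    by move/hh; rewrite -h (map_f fst qs).
  have cA : #|A q| = (n - 2)%N.
    have := cardsC [set q.1; q.2]; rewrite cards2 xw card_ord /A /=; lia.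
  set D := Dset e q.1 q.2; set E := Dset e q.2 q.1.
  have DA : D \subset A q.
    apply/subsetP => z; rewrite /D /Dset /Nb /A !inE => /andP [zw /andP [_ exz]].
    rewrite (negbTE zw) orbF; apply/eqP => zx; by rewrite zx eirr in exz.
  have EA : E \subset A q.
    apply/subsetP => z; rewrite /E /Dset /Nb /A !inE => /andP [zw /andP [_ exz]].
    rewrite (negbTE zw) /=; apply/eqP => zx; by rewrite zx eirr in exz.
  have DE : D :&: E = set0.
    apply/setP => z; rewrite /D /E /Dset /Nb !inE; case: (e q.2 z); by rewrite ?andbF.
  have Ep : #|E| = #|D| by rewrite /D /E (card_Dset_sym esym eirr ereg).
  have dp : (d <= 10 * #|D|)%N by move/allP: als => /(_ q qs).
  have pd : (#|D| <= d)%N.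
    rewrite -(cardNb ereg q.1); apply: subset_leq_card; rewrite /D /Dset.
    by apply: subset_trans (subsetDl _ _) (subsetDl _ _).
  have p0 : (0 < #|D|)%N by lia.
  have hh1 : (n <= 2 * k)%N by rewrite hk; lia.
  have hh2 : (k <= n)%N by rewrite hk; lia.
  have hh3 : (2 * #|D| <= n)%N.
    have h4 : (2 * (n %/ 2) <= n)%N by lia.
    have h5 := leq_trans pd hd'.
    move: h4 h5; generalize (n %/ 2)%N => a; generalize #|D| => b; lia.
  have [hs hs0] := num_hs R hn hh1 hh2 hh3.
  rewrite -cA in hs hs0.
  have hk1 : (1 < k)%N by rewrite hk; lia.
  have hk2 : (k < #|A q|)%N by rewrite cA hk; lia.
  have hk3 : (#|A q| <= 2 * k)%N by rewrite cA hk; lia.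
  have := pair_bound DA EA DE (erefl _) Ep hk1 hk2 hk3 p0 pd dp hs hs0.
  rewrite card_F cA -/C2 => h; apply: le_trans h _; rewrite le_eqVlt; apply/orP; left; apply/eqP.
  rewrite [LHS]big_mkcond [RHS]big_mkcond; apply: eq_bigr => V _; rewrite /gV !inE.
  by case: (V \subset A q); case: (#|V| == k).
have Ssum : m0%:R * (3 / 8 * C2%:R) <= \sum_(V in VV) ((count (gV^~ V) s)%:R : R).
  have e1 V : ((count (gV^~ V) s)%:R : R) = \sum_(q <- s) ((gV q V)%:R : R).
    rewrite -sum1_count natr_sum big_mkcond /=; apply: eq_bigr => q _.
    by case: (gV q V).
  under eq_bigr => V _ do rewrite e1.
  rewrite exchange_big /=.
  have : \sum_(q <- s) (3 / 8 * C2%:R) <= \sum_(q <- s) \sum_(V in VV) ((gV q V)%:R : R).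
    rewrite big_seq [X in _ <= X]big_seq; apply: ler_sum => q qs; exact: pairq.
  move=> h; apply: le_trans h; rewrite (big_nth (x0, x0)) big_mkord sumr_const card_ord ss mulr_natl.
  by [].
pose M := (n %/ 100 + 1)%N.
have [V0 V0in cV0] : exists2 V0, V0 \in VV & (M <= count (gV^~ V0) s)%N.
  case: (boolP [exists (V0 | V0 \in VV), (M <= count (gV^~ V0) s)%N]) => [/exists_inP // | hno].
  exfalso; move: hno; rewrite negb_exists_in => /forall_inP hno.
  have S2 : \sum_(V in VV) ((count (gV^~ V) s)%:R : R) <= \sum_(V in VV) ((n %/ 100)%:R : R).
    apply: ler_sum => V VVin; rewrite ler_nat; have := hno V VVin; rewrite /M; lia.
  rewrite sumr_const /VV card_draws card_ord -[_ *+ 'C(n, k)]mulr_natr -/VV in S2.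
  have C2pos : (0 < C2)%N by rewrite /C2 bin_gt0 hk; lia.
  set h := n./2.
  have rel : (h * (h - 1) * 'C(n, k) = n * (n - 1) * C2)%N.
    have r1 := mul_bin_down n k.
    have r2 := mul_bin_down n.-1 k.
    have e1 : (n - k = h)%N by rewrite /h hk -divn2; lia.
    have e2 : (n.-1 - k = h - 1)%N by rewrite /h hk -divn2; lia.
    rewrite e1 in r1; rewrite e2 in r2.
    have e3 : (n - 1 = n.-1)%N by lia.
    have e4 : C2 = 'C(n.-2, k) by rewrite /C2 subn2.
    rewrite e3 e4 -[RHS]mulnA r2 [RHS]mulnCA r1 mulnCA mulnA //.
  have h1 : (1 <= h)%N by rewrite /h -divn2; lia.
  have relR : (h%:R * (h%:R - 1)) * ('C(n, k))%:R = n%:R * (n%:R - 1) * C2%:R :> R.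
    have eh : (h - 1)%:R = h%:R - 1 :> R by rewrite natrB.
    have en : (n - 1)%:R = n%:R - 1 :> R by rewrite natrB //; lia.
    by rewrite -eh -en -!natrM rel.
  have hc := num_cnt R hn.
  rewrite -/h -/m0 in hc.
  have hpos : 0 <= h%:R * (h%:R - 1) :> R.
    have : 1 <= h%:R :> R by rewrite (ler_nat R 1).
    nra.
  have c2p : 0 < C2%:R :> R by rewrite ltr0n.
  have := le_trans Ssum S2 => h2.
  have h3 : m0%:R * (3 / 8 * C2%:R) * (h%:R * (h%:R - 1)) <= (n %/ 100)%:R * ('C(n, k))%:R * (h%:R * (h%:R - 1)) :> R.
    exact: ler_wpM2r hpos _ _ h2.
  have h4 : (n %/ 100)%:R * ('C(n, k))%:R * (h%:R * (h%:R - 1)) = (n %/ 100)%:R * (n%:R * (n%:R - 1)) * C2%:R :> R.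
    by rewrite -mulrA [_ * (h%:R * _)]mulrC relR; ring.
  rewrite h4 in h3.
  have h5 : (n %/ 100)%:R * (n%:R * (n%:R - 1)) * C2%:R < 3 / 8 * m0%:R * (h%:R * (h%:R - 1)) * C2%:R :> R.
    by rewrite ltr_pM2r.
  have h6 : m0%:R * (3 / 8 * C2%:R) * (h%:R * (h%:R - 1)) = 3 / 8 * m0%:R * (h%:R * (h%:R - 1)) * C2%:R :> R by ring.
  by have := le_lt_trans h3 h5; rewrite h6 ltxx.
pose sel := take M [seq q <- s | gV q V0].
have szsel : size sel = M by rewrite size_takel // size_filter.
have hsub : subseq sel s := subseq_trans (take_subseq _ _) (filter_subseq _ _).
have usel : uniq (map fst sel ++ map snd sel).
  by apply: subseq_uniq us; apply: cat_subseq; apply: map_subseq.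
have [inju inju' neq] := sel_props x0 szsel usel.
have qin (i : 'I_M) : gV (nth (x0, x0) sel i) V0.
  have : nth (x0, x0) sel i \in sel by apply: mem_nth; rewrite szsel.
  by move/mem_take; rewrite mem_filter => /andP [].
exists (\sum_(i < M) Num.sqrt (d%:R : R)).
split.
  rewrite sumr_const card_ord -mulr_natr.
  have r0 := sqrtr_ge0 (d%:R : R).
  have hM : n%:R <= 100 * M%:R :> R.
    have : (n <= 100 * M)%N by rewrite /M; lia.
    by rewrite -(ler_nat R) natrM.
  rewrite ler_pdivrMr //; nra.
exists (~: V0); split; first exact: cardU.
cbv zeta; rewrite setCK.
exists M, (fun i => (nth (x0, x0) sel i).1), (fun i => (nth (x0, x0) sel i).2), (fun _ => d).
split; first exact: inju.
split; first exact: inju'.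
split; first exact: neq.
split.
  move=> i; have := qin i; rewrite /gV => /and3P [hA _ _].
  by split; rewrite inE; apply/negP => hv; have := subsetP hA _ hv; rewrite /A !inE eqxx ?orbT.
split.
  have : (M * 20 <= n)%N by rewrite /M; lia.
  by rewrite ler_pdivlMr // -(ler_nat R) natrM.
split; first by move=> _.
split; first by [].
move=> i; have := qin i; rewrite /gV => /and3P [hA /eqP hk' hg].
set q := nth (x0, x0) sel i in hA hg *.
move/and4P: hg => [g1 g2 g3 g4].
have hA' : V0 \subset ~: [set q.2; q.1] by rewrite setUC.
rewrite (nbhd_diff e hA) (nbhd_diff e hA').
have c1 := cardsID (nbhd e V0 q.2) (nbhd e V0 q.1).
have c2 := cardsID (nbhd e V0 q.1) (nbhd e V0 q.2).
rewrite (nbhd_diff e hA) in c1; rewrite (nbhd_diff e hA') setIC in c2.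
rewrite -c1 -c2 hk' !natrD.
split.
- lra.
- lra.
- lra.
- right.
  set a := (#|Dset e q.1 q.2 :&: V0|)%:R in g1 g2 g4 *.
  set b := (#|Dset e q.2 q.1 :&: V0|)%:R in g3 g4 *.
  set c := (#|nbhd e V0 q.1 :&: nbhd e V0 q.2|)%:R.
  have -> : c + a - (c + b) = a - b by ring.
  have r0 := sqrtr_ge0 (d%:R : R).
  have r2 := sqr_sqrtr (ler0n R d).
  have y0 := normr_ge0 (a - b).
  have y2 : `|a - b| ^+ 2 = (a - b) ^+ 2 := real_normK (num_real _).
  nra.
Qed.
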